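(* In the M/M/1 setting below, $\mathrm{SW}^P_{opt}\le\mathrm{SW}^C_{opt}=\mathrm{SW}^S_{opt}$ holds in each of the following cases: (i) $\xi(0)\ge\bar\lambda$; (ii) $\xi(0)<\bar\lambda$ and $\lambda_{\max}\le(1+\epsilon)\lambda$, where $\epsilon=\sqrt{C/(R\mu)}$.
   Context: Setting: an M/M/1 queue with true (deterministic) Poisson arrival rate $\lambda>0$ and exponential service times with rate $\mu$, so $W(x)=1/(\mu-x)$ for $x\in[0,\mu)$. Each served customer receives reward $R$, pays fee $p$ (a transfer payment from the social optimizer's viewpoint), and incurs waiting cost $C>0$ per unit time, with $R>C/\mu$. Customers' beliefs about the arrival rate are described by a non-degenerate nonnegative random variable $\Lambda$ whose support has minimum $\lambda_{\min}$ and maximum $\lambda_{\max}$, with $0\le\lambda_{\min}<\lambda<\lambda_{\max}<\mu$. For $0\le p<R-C/\mu$, $\xi(p)=\mu-C/(R-p)$ (so $\xi(0)=\mu-C/R$). Let $\bar\lambda=\mu-1/\mathbb{E}[1/(\mu-\Lambda)]$. Joining probabilities: classical $q^C(p)=\min\{\xi(p)/\lambda,1\}$; shared belief $q^S(p)=1$ if $C\,\mathbb{E}[W(\Lambda)]\le R-p$, otherwise the unique $q\in[0,1)$ with $C\,\mathbb{E}[W(q\Lambda)]=R-p$; private belief $Q(p)=\min\{\xi(p)/\Lambda,1\}$. Social welfare rates: $\mathrm{SW}^C(p)=\lambda q^C(p)\,(R-C\,W(\lambda q^C(p)))$, $\mathrm{SW}^S(p)=\lambda q^S(p)\,(R-C\,W(\lambda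 q^S(p)))$, $\mathrm{SW}^P(p)=\mathbb{E}[\lambda Q(p)\,(R-C\,W(\lambda Q(p)))]$. Optimal values: $\mathrm{SW}^X_{opt}=\sup_{0\le p<R-C/\mu}\mathrm{SW}^X(p)$ for $X\in\{C,S,P\}$. *)

(* Defs.v *)
From HB Require Import structures.
From mathcomp Require Import all_boot all_order all_algebra.
From mathcomp Require Import all_classical all_reals all_analysis.
Set Implicit Arguments. Unset Strict Implicit. Unset Printing Implicit Defensive.
Import Order.TTheory GRing.Theory Num.Theory.
Import numFieldNormedType.Exports.
Local Open Scope classical_set_scope.
Local Open Scope ring_scope.

Section mm1.
Context {R : realType} {d : measure_display} {T : measurableType d}.
Variable P : probability T R.

(* Expected sojourn time W(x) = 1/(mu - x) in an M/M/1 queue *)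
Definition W (mu x : R) : R := (mu - x)^-1.

Definition xi (mu Rw C p : R) : R := mu - C / (Rw - p).

Definition lbar (mu : R) (L : T -> R) : R :=
  mu - (fine ('E_P[fun w => W mu (L w)]))^-1.

Definition rv_support (L : T -> R) : set R :=
  [set x | forall e : R, 0 < e -> (0 < P [set w | (`|L w - x| < e)%R])%E].

Definition qC (lam mu Rw C p : R) : R := Order.min (xi mu Rw C p / lam) 1.

Definition qS (L : T -> R) (mu Rw C p : R) : R :=
  if `[< (C%:E * 'E_P[fun w => W mu (L w)] <= (Rw - p)%:E)%E >] then 1
  else xget 0 [set q : R | 0 <= q < 1 /\
                 (C%:E * 'E_P[fun w => W mu (q * L w)] = (Rw - p)%:E)%E].

(* private belief joining probability Q(p) = min{xi(p)/Lambda, 1}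
   (equal to 1 when Lambda <= xi(p), in particular when Lambda = 0) *)
Definition Qp (L : T -> R) (mu Rw C p : R) (w : T) : R :=
  if L w <= xi mu Rw C p then 1 else xi mu Rw C p / L w.

Definition SW_C (lam mu Rw C p : R) : \bar R :=
  (lam * qC lam mu Rw C p * (Rw - C * W mu (lam * qC lam mu Rw C p)))%:E.

Definition SW_S (L : T -> R) (lam mu Rw C p : R) : \bar R :=
  (lam * qS L mu Rw C p * (Rw - C * W mu (lam * qS L mu Rw C p)))%:E.

Definition SW_P (L : T -> R) (lam mu Rw C p : R) : \bar R :=
  'E_P[fun w => lam * Qp L mu Rw C p w * (Rw - C * W mu (lam * Qp L mu Rw C p w))].

Definition SWopt (SW : R -> \bar R) (mu Rw C : R) : \bar R :=
  ereal_sup [set SW p | p in [set p : R | 0 <= p < Rw - C / mu]].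

End mm1.

(* Main.v *)
Require Import Defs.
From HB Require Import structures.
From mathcomp Require Import all_boot all_order all_algebra.
From mathcomp Require Import all_classical all_reals all_analysis.
From mathcomp Require Import ring lra measurable_realfun.
Import Order.TTheory GRing.Theory Num.Theory.
Import numFieldNormedType.Exports.
Local Open Scope classical_set_scope.
Local Open Scope ring_scope.

Section S.
Context {R : realType} {d : measure_display} {T : measurableType d}.
Variable P : probability T R.
Variable L : {RV P >-> R}.

Lemma mset (A : set R) : measurable A -> measurable (L @^-1` A).
Proof. exact: measurable_funPTI. Qed.

Lemma supp_exists a b : a <= b -> (0 < P [set w | (a <= L w <= b)%R])%E ->
  exists s, a <= s <= b /\ forall e : R, 0 < e -> (0 < P [set w | (`|L w - s| < e)%R])%E.
Proof.
move=> ab Pab.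
pose S := [set x | x <= b /\ (0 < P [set w | (x <= L w <= b)%R])%E].
have hS : has_sup S by split; [exists a | exists b => x [] //].
exists (sup S); split.
  by apply/andP; split; [apply: sup_upper_bound | apply: sup_le_ub => //; [exists a| move=> x []]].
move=> e e0.
have [x [xb Px] xs] := sup_adherent e0 hS.
have mI : forall u v, measurable [set w | u <= L w <= v].
  move=> u v; rewrite (_ : [set w | _] = L @^-1` `[u, v]); first exact: mset (measurable_itv _).
  by apply/seteqP; split => w /=; rewrite in_itv.
have mB : measurable [set w | `|L w - sup S| < e].
  rewrite (_ : [set w | _] = L @^-1` `]sup S - e, sup S + e[); first exact: mset (measurable_itv _).
  by apply/seteqP; split => w /=; rewrite in_itv /= distrC ltr_distlC.
have P0 : P [set w | (sup S + e <= L w <= b)%R] = 0%E.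
  have [sb|bs] := leP (sup S + e) b; last first.
    rewrite (_ : [set w | _] = set0) ?measure0 //.
    by apply/seteqP; split => w0 //= /andP[h1 h2]; have := lt_le_trans bs (le_trans h1 h2); rewrite ltxx.
  apply/eqP; rewrite eq_le measure_ge0 andbT; rewrite leNgt; apply/negP => hp.
  have : S (sup S + e) by [].
  move/(sup_upper_bound hS); rewrite gerDl leNgt e0 //.
have : (P [set w | (x <= L w <= b)%R] <= P [set w | (`|L w - sup S| < e)%R] + P [set w | (sup S + e <= L w <= b)%R])%E.
  apply: le_trans; last exact: measureU2.
  apply: le_measure; rewrite ?inE; [exact: mI | exact: measurableU | ].
  move=> w /= /andP[h1 h2]; have [h3|h3] := ltP (L w) (sup S + e); [left|right; apply/andP; split => //].
  rewrite distrC ltr_distlC h3 andbT; exact: lt_le_trans h1.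
rewrite P0 adde0; exact: lt_le_trans.
Qed.


Lemma as_bound (M : R) : (forall x, rv_support P L x -> x <= M) ->
  P (L @^-1` `]M, +oo[) = 0%E.
Proof.
move=> hM.
pose B (n : nat) := [set w | (M + n.+1%:R^-1 <= L w <= M + n.+1%:R)%R].
have mB n : measurable (B n).
  rewrite (_ : B n = L @^-1` `[M + n.+1%:R^-1, M + n.+1%:R]); first exact: mset (measurable_itv _).
  by apply/seteqP; split => w /=; rewrite in_itv.
have nB n : P.-negligible (B n).
  apply/negligibleP => //; apply/eqP; rewrite eq_le measure_ge0 andbT leNgt; apply/negP => hp.
  have ab : M + n.+1%:R^-1 <= M + n.+1%:R.
    rewrite lerD2l; apply: (@le_trans _ _ 1); last by rewrite ler1n.
    by rewrite invf_le1 ?ler1n ?ltr0n.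
  have [s [/andP[h1 h2] hs]] := supp_exists _ _ ab hp.
  have := hM s hs; rewrite leNgt => /negP; apply; apply: lt_le_trans h1.
  by rewrite ltrDl invr_gt0 ltr0n.
have : P.-negligible (\bigcup_n B n) by exact: negligible_bigcup.
move=> [A [mA PA sub]].
apply/eqP; rewrite eq_le measure_ge0 andbT -PA; apply: le_measure; rewrite ?inE //.
  exact: mset (measurable_itv _).
move=> w /=; rewrite in_itv /= andbT => Mw; apply: sub.
set t := L w - M; have t0 : 0 < t by rewrite subr_gt0.
exists (Num.truncn (t + t^-1)) => //=.
have h := truncnS_gt (t + t^-1).
have h1 : t < (Num.truncn (t + t^-1)).+1%:R by apply: le_lt_trans h; rewrite lerDl ltW // invr_gt0.
have h2 : t^-1 < (Num.truncn (t + t^-1)).+1%:R by apply: le_lt_trans h; rewrite lerDr ltW.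
apply/andP; split.
  have : (Num.truncn (t + t^-1)).+1%:R^-1 < t.
    by rewrite invf_plt ?posrE ?ltr0n.
  move: (Num.truncn _) => k hk; rewrite /t in hk; move: (k.+1%:R^-1) hk => r; lra.
move: h1; move: (Num.truncn _) => k; rewrite /t; move: (k.+1%:R) => r; lra.
Qed.
End S.

Lemma measurable_inv (R : realType) : measurable_fun [set: R] (@GRing.inv R).
Proof.
have -> : [set: R] = ~` [set 0] `|` [set 0] by rewrite setvU.
apply/measurable_funU; [|exact: measurable_set1|split; last exact: measurable_fun_set1].
  by apply: measurableC; exact: measurable_set1.
apply: open_continuous_measurable_fun.
  rewrite openC; exact: closed_eq.
move=> x /set_mem /= x0; apply: inv_continuous; exact/eqP.
Qed.


Section G.
Context {R : realType} {d : measure_display} {T : measurableType d}.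
Variable P : probability T R.
Variable L : {RV P >-> R}.
Variables (mu M c : R).
Hypothesis L0 : forall w, 0 <= L w.
Hypothesis M0 : 0 < M.
Hypothesis Mmu : M < mu.
Hypothesis hM : P (L @^-1` `]M, +oo[) = 0%E.
Hypothesis c0 : 0 < c.
Hypothesis cM : c < M.
Hypothesis hc : (0 < P [set w | (c < L w)%R])%E.

Let mL : measurable_fun setT L. Proof. exact: measurable_funP. Qed.

Definition Lt w := Order.min (L w) M.

Let mLt : measurable_fun setT Lt.
Proof. exact: measurable_minr. Qed.

Lemma bounded_of (f : T -> R) k : (forall x, `|f x| <= k) -> [bounded f x | x in setT].
Proof.
move=> h; exists k; split; first exact: num_real.
move=> y ky x _; exact: le_trans (h x) (ltW ky).
Qed.

Lemma integ_bounded (f : T -> R) k : measurable_fun setT f -> (forall x, `|f x| <= k) ->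
  P.-integrable setT (EFin \o f).
Proof.
move=> mf h; apply: measurable_bounded_integrable => //.
  by apply: (le_lt_trans (probability_le1 P measurableT)); rewrite ltry.
exact: bounded_of h.
Qed.

Lemma measW (g : T -> R) (q : R) : measurable_fun setT g -> measurable_fun setT (fun w => W mu (q * g w)).
Proof.
move=> mg; rewrite /W.
have -> : (fun w => (mu - q * g w)^-1) = GRing.inv \o (fun w => mu - q * g w) by [].
apply: measurableT_comp; first exact: measurable_inv.
apply: measurable_funB => //; exact: measurable_funM.
Qed.

Lemma E_Lt q : ('E_P[fun w => W mu (q * L w)])%E = ('E_P[fun w => W mu (q * Lt w)])%E.
Proof.
rewrite unlock; apply: ae_eq_integral => //.
- by apply/measurable_EFinP; exact: measW.
- by apply/measurable_EFinP; exact: measW.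
exists (L @^-1` `]M, +oo[); split => //; first exact: measurable_funPTI (measurable_itv _).
move=> w /= h; rewrite in_itv /= andbT ltNge; apply/negP => LM; apply: h => _.
by rewrite /Lt (min_idPl LM).
Qed.

Lemma Lt_bd w : 0 <= Lt w <= M.
Proof. by rewrite /Lt le_min L0 ltW //= ge_min lexx orbT. Qed.

Lemma W_bd q w : 0 <= q <= 1 -> mu^-1 <= W mu (q * Lt w) <= (mu - M)^-1.
Proof.
move=> /andP[q0 q1]; have /andP[l0 l1] := Lt_bd w.
have h1 : 0 <= q * Lt w by rewrite mulr_ge0.
have h2 : q * Lt w <= M.
  apply: le_trans (_ : 1 * M <= M); last by rewrite mul1r.
  by apply: ler_pM.
rewrite /W; move: h1 h2; move: (q * Lt w) => y h1 h2; have A1 := Mmu; have A2 := M0.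
by apply/andP; split; rewrite lef_pV2 ?posrE; lra.
Qed.

Lemma integ_W q : 0 <= q <= 1 -> P.-integrable setT (EFin \o (fun w => W mu (q * Lt w))).
Proof.
move=> hq; apply: (@integ_bounded _ ((mu - M)^-1)); first exact: measW.
move=> w; have /andP[a b] := W_bd q w hq.
rewrite ger0_norm //; apply: le_trans a; rewrite invr_ge0; have := Mmu; have := M0; lra.
Qed.

Lemma gE_fin q : 0 <= q <= 1 ->
  ('E_P[fun w => W mu (q * L w)])%E = (fine ('E_P[fun w => W mu (q * L w)])%E)%:E.
Proof.
move=> hq; rewrite fineK // E_Lt unlock; have h := integrable_fin_num measurableT (integ_W q hq); exact h.
Qed.


Lemma key_ineq (a b m t : R) : 0 < a -> a <= b -> b <= m -> 0 <= t <= b - a ->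
  b^-1 + t / (m * m) <= a^-1.
Proof.
move=> a0 ab bm /andP[t0 tba].
have b0 : 0 < b := lt_le_trans a0 ab.
have m0 : 0 < m := lt_le_trans b0 bm.
have -> : a^-1 = b^-1 + (b - a) / (a * b).
  by field; apply/andP; split; apply/lt0r_neq0.
rewrite lerD2l; apply: ler_pM => //; first by rewrite invr_ge0 mulr_ge0 // ltW.
rewrite lef_pV2 ?posrE ?mulr_gt0 //; apply: ler_pM; [exact: ltW|exact: ltW|exact: le_trans ab bm|exact: bm].
Qed.

Lemma gE_le q b : 0 <= q <= 1 -> q * M <= b -> b < mu ->
  fine ('E_P[fun w => W mu (q * L w)])%E <= (mu - b)^-1.
Proof.
move=> hq qb bmu; rewrite -lee_fin -gE_fin // E_Lt.
rewrite -[X in (_ <= X)%E](expectation_cst P) unlock.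
apply: le_integral => //; first exact: integ_W.
  by apply: (@integ_bounded _ `|(mu - b)^-1|) => // x.
move=> w _; rewrite lee_fin /W /cst.
have /andP[q0 q1] := hq; have /andP[l0 l1] := Lt_bd w.
have h1 : q * Lt w <= b by apply: le_trans qb; exact: ler_wpM2l.
rewrite lef_pV2 ?posrE; [|lra|].
  by rewrite lerD2l lerN2.
move: h1; move: (q * Lt w) => y; lra.
Qed.

Lemma gE0 : ('E_P[fun w => W mu (0 * L w)])%E = (mu^-1)%:E.
Proof.
have -> : (fun w => W mu (0 * L w)) = cst (mu^-1).
  by apply/funext => w; rewrite /W mul0r subr0.
exact: expectation_cst.
Qed.

Lemma gE_mono q1 q2 : 0 <= q1 -> q1 < q2 -> q2 <= 1 ->
  fine ('E_P[fun w => W mu (q1 * L w)])%E < fine ('E_P[fun w => W mu (q2 * L w)])%E.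
Proof.
move=> q10 q12 q21.
have hq1 : 0 <= q1 <= 1 by rewrite q10 /= ltW // (lt_le_trans q12 q21).
have hq2 : 0 <= q2 <= 1 by rewrite q21 andbT ltW // (le_lt_trans q10 q12).
pose A := [set w | (c < L w)%R].
have mA : measurable A.
  rewrite (_ : A = L @^-1` `]c, +oo[); first exact: measurable_funPTI (measurable_itv _).
  by apply/seteqP; split => w /=; rewrite in_itv /= andbT.
have m0 : 0 < mu := lt_trans M0 Mmu.
pose k := (q2 - q1) * c / (mu * mu).
have k0 : 0 < k by rewrite /k divr_gt0 ?mulr_gt0 // subr_gt0.
have PAfin : P A \is a fin_num.
  rewrite ge0_fin_numE ?measure_ge0 //; apply: le_lt_trans (probability_le1 P mA) _.
  exact: ltry.
have PA0 : 0 < fine (P A) by rewrite -lte_fin fineK.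
have iA : P.-integrable setT (EFin \o (fun w => k * \1_A w)).
  apply: (@integ_bounded _ k); first by apply: measurable_funM => //; exact: measurable_indic.
  move=> w; rewrite indicE; case: (_ \in _); rewrite ?mulr1 ?mulr0 ?normr0 ?(ger0_norm (ltW k0)) //; exact: ltW.
have : ('E_P[fun w => W mu (q1 * L w)] + (k * fine (P A))%:E <=
        'E_P[fun w => W mu (q2 * L w)])%E.
  rewrite !E_Lt EFinM fineK // unlock.
  rewrite -(setIT A) -integral_indic // -integralZl //; last first.
    by apply: (@integ_bounded _ 1); [exact: measurable_indic| move=> v; rewrite indicE; case: (_ \in _); rewrite ?normr1 ?normr0].
  have -> : (\int[P]_(x in setT) (k%:E * (\1_A x)%:E))%E = (\int[P]_(x in setT) (EFin \o (fun w => (k * \1_A w)%R)) x)%E.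
    by apply: eq_integral => w _ /=; rewrite EFinM.
  rewrite -integralD_EFin //; last exact: integ_W.
  apply: le_integral => //.
    by apply: integrableD => //; exact: integ_W.
    exact: integ_W.
  move=> w _; rewrite /= -EFinD lee_fin /W.
  have /andP[l0 l1] := Lt_bd w.
  have hy1 : q1 * Lt w <= q2 * Lt w by apply: ler_wpM2r => //; exact: ltW.
  have hy2 : q2 * Lt w <= M.
    by apply: le_trans (_ : 1 * M <= M); [apply: ler_pM => //; exact: (le_trans q10 (ltW q12))|rewrite mul1r].
  have hmu := Mmu.
  rewrite indicE; case: (boolP (w \in A)) => wA; last first.
    rewrite mulr0 addr0 lef_pV2 ?posrE; [|lra|].
      by rewrite lerD2l lerN2.
    move: hy2; move: (q2 * Lt w) => y; lra.
  rewrite mulr1 /k; apply: key_ineq.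
  - move: hy2; move: (q2 * Lt w) => y; lra.
  - by rewrite lerD2l lerN2.
  - move: (mulr_ge0 q10 l0); move: (q1 * Lt w) => y; lra.
  - apply/andP; split; first by rewrite mulr_ge0 ?subr_ge0 ?ltW.
    have cy : c <= Lt w.
      by rewrite /Lt le_min (ltW cM) andbT ltW //; move: wA; rewrite inE.
    have -> : mu - q1 * Lt w - (mu - q2 * Lt w) = (q2 - q1) * Lt w by ring.
    by apply: ler_wpM2l => //; rewrite subr_ge0; exact: ltW.
rewrite (gE_fin q1 hq1) (gE_fin q2 hq2) -EFinD lee_fin => h.
apply: lt_le_trans h; rewrite ltrDl; exact: mulr_gt0.
Qed.
End G.

Section F.
Context {R : realType}.
Variables (mu Rw C : R).

Definition fw (x : R) := x * (Rw - C * W mu x).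

Lemma fw_cmp x z : x < mu -> z < mu ->
  0 <= ((mu - x) - (mu - z)) * (Rw * (mu - x) * (mu - z) - C * mu) -> fw x <= fw z.
Proof.
move=> xm zm h; rewrite -subr_ge0.
have -> : fw z - fw x = ((mu - x) - (mu - z)) * (Rw * (mu - x) * (mu - z) - C * mu) / ((mu - x) * (mu - z)).
  rewrite /fw /W; field; apply/andP; split; rewrite subr_eq0 gt_eqF //.
apply: divr_ge0 => //; apply: mulr_ge0; rewrite subr_ge0 ltW //.
Qed.

Lemma xget_eq {T : choiceType} (x0 x : T) (S : set T) : S x -> (forall y, S y -> y = x) -> xget x0 S = x.
Proof.
move=> Sx uS; apply: uS; exact: xgetI Sx.
Qed.

End F.


Lemma fw_bd {R : realType} (mu Rw C lam y : R) : 0 <= y <= lam -> lam < mu -> 0 <= C -> 0 <= Rw ->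
  `|fw mu Rw C y| <= lam * (Rw + C * (mu - lam)^-1).
Proof.
move=> /andP[y0 yl] lm C0 R0.
have h1 : 0 < mu - y by rewrite subr_gt0; exact: le_lt_trans yl lm.
have h2 : 0 < mu - lam by rewrite subr_gt0.
rewrite /fw /W normrM ger0_norm //; apply: ler_pM => //.
apply: le_trans (ler_normB _ _) _; rewrite ger0_norm // lerD2l.
have hi : 0 <= (mu - y)^-1 by rewrite invr_ge0; exact: ltW.
rewrite normrM (ger0_norm C0) (ger0_norm hi); apply: ler_wpM2l => //.
rewrite lef_pV2 ?posrE //; by rewrite lerD2l lerN2.
Qed.

Lemma SWopt_eq {R : realType} (F : R -> \bar R) (mu Rw C v : R) :
  (forall p, 0 <= p < Rw - C / mu -> (F p <= v%:E)%E) ->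
  (exists p, 0 <= p < Rw - C / mu /\ F p = v%:E) -> SWopt F mu Rw C = v%:E.
Proof.
move=> ub [p [hp Fp]]; apply/eqP; rewrite eq_le; apply/andP; split.
  by apply: ge_ereal_sup => _ [q hq <-]; exact: ub.
by rewrite -Fp; apply: ereal_sup_ubound; exists p.
Qed.

Theorem theorem4 (R : realType) (d : measure_display) (T : measurableType d)
  (P : probability T R) (L : {RV P >-> R})
  (lam mu Rw C lmin lmax : R) :
  0 < lam -> 0 < C -> C / mu < Rw ->
  (forall w, 0 <= L w) ->
  ~ (exists c : R, P [set w | L w = c] = 1%E) ->
  rv_support P L lmin -> rv_support P L lmax ->
  (forall x, rv_support P L x -> lmin <= x <= lmax) ->
  0 <= lmin -> lmin < lam -> lam < lmax -> lmax < mu ->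
  (lbar P mu L <= xi mu Rw C 0 \/
   (xi mu Rw C 0 < lbar P mu L /\ lmax <= (1 + Num.sqrt (C / (Rw * mu))) * lam)) ->
  (SWopt (SW_P P L lam mu Rw C) mu Rw C <= SWopt (SW_C lam mu Rw C) mu Rw C)%E /\
  SWopt (SW_C lam mu Rw C) mu Rw C = SWopt (SW_S P L lam mu Rw C) mu Rw C.
Proof.
move=> lam0 C0 CR L0 _ _ smax hsupp lmin0 lminlam lamlmax lmaxmu hcase.
have lmax0 : 0 < lmax := lt_trans lam0 lamlmax.
have mu0 : 0 < mu := lt_trans lmax0 lmaxmu.
have Rw0 : 0 < Rw := lt_trans (divr_gt0 C0 mu0) CR.
have CRm : C < Rw * mu by rewrite -ltr_pdivrMr.
set e := Num.sqrt (C / (Rw * mu)).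
have e0 : 0 < e by rewrite sqrtr_gt0 divr_gt0 ?mulr_gt0.
have ee : e * e = C / (Rw * mu) by rewrite -expr2 sqr_sqrtr // ltW // divr_gt0 ?mulr_gt0.
have hCe : C = Rw * mu * (e * e) by rewrite ee; field; apply/andP; split; exact: lt0r_neq0.
have e1 : e < 1.
  have : e * e < 1 by rewrite ee ltr_pdivrMr ?mulr_gt0 // mul1r.
  move=> h; nra.
have CRe : C / Rw = mu * (e * e) by rewrite hCe; field; exact: lt0r_neq0.
set xs := mu - mu * e.
have xs0 : 0 < xs by rewrite /xs subr_gt0 gtr_pMr.
set m := Order.min lam xs.
have m0 : 0 < m by rewrite /m lt_min lam0.
have ml : m <= lam by rewrite /m ge_min lexx.
have mx : m <= xs by rewrite /m ge_min lexx orbT.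
have mmu : m < mu := le_lt_trans ml (lt_trans lamlmax lmaxmu).
have fwmax : forall x, 0 <= x <= lam -> fw mu Rw C x <= fw mu Rw C m.
  move=> x /andP[x0 xl]; have xmu : x < mu := le_lt_trans xl (lt_trans lamlmax lmaxmu).
  apply: fw_cmp => //.
  have [hl|hl] := leP lam xs.
    have -> : m = lam by rewrite /m (min_idPl hl).
    apply: mulr_ge0; first by rewrite subr_ge0 lerD2l lerN2.
    rewrite subr_ge0 hCe.
    have h1 : mu * e <= mu - lam by move: hl; rewrite /xs; lra.
    have h2 : mu * e <= mu - x by move: hl; rewrite /xs; lra.
    have h3 : (mu * e) * (mu * e) <= (mu - x) * (mu - lam).
      by apply: ler_pM => //; rewrite ltW // mulr_gt0.
    have -> : Rw * mu * (e * e) * mu = Rw * ((mu * e) * (mu * e)) by ring.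
    rewrite -(mulrA Rw (mu - x)); apply: ler_wpM2l; [exact: ltW|exact: h3].
  have -> : m = xs by rewrite /m (min_idPr (ltW hl)).
  have -> : (mu - x - (mu - xs)) * (Rw * (mu - x) * (mu - xs) - C * mu) =
            Rw * mu * e * ((mu - x - mu * e) ^+ 2).
    by rewrite /xs hCe; ring.
  by apply: mulr_ge0; [rewrite !mulr_ge0 // ltW|exact: sqr_ge0].
have xipos : forall p, 0 <= p < Rw - C / mu -> 0 < xi mu Rw C p.
  move=> p /andP[p0 pl].
  have h : C / mu < Rw - p by move: pl; move: (C / mu) => t; lra.
  have h2 : C < (Rw - p) * mu by rewrite -ltr_pdivrMr.
  have h3 : 0 < Rw - p by apply: lt_trans h; exact: divr_gt0.
  by rewrite /xi subr_gt0 ltr_pdivrMr // mulrC.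
have hC : SWopt (SW_C lam mu Rw C) mu Rw C = (fw mu Rw C m)%:E.
  apply: SWopt_eq.
    move=> p hp; rewrite /SW_C lee_fin.
    change (fw mu Rw C (lam * qC lam mu Rw C p) <= fw mu Rw C m).
    apply: fwmax; have xp := xipos p hp.
    have q0 : 0 <= qC lam mu Rw C p by rewrite /qC le_min ler01 andbT divr_ge0 // ltW.
    have q1 : qC lam mu Rw C p <= 1 by rewrite /qC ge_min lexx orbT.
    by apply/andP; split; [exact: mulr_ge0 (ltW lam0) q0 | rewrite ler_piMr //; exact: ltW].
  have mm0 : 0 < mu - m by rewrite subr_gt0.
  exists (Rw - C / (mu - m)); split.
    apply/andP; split.
      rewrite subr_ge0 ler_pdivrMr // hCe.
      have : mu * e <= mu - m by move: mx; rewrite /xs; lra.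
      move=> h; apply: (@le_trans _ _ (Rw * (mu * e))).
        have -> : Rw * mu * (e * e) = Rw * (mu * e) * e by ring.
        by rewrite ger_pMr ?mulr_gt0 // ltW.
      by apply: ler_wpM2l => //; exact: ltW.
    rewrite ltrD2l ltrN2 ltr_pM2l //.
    by rewrite ltf_pV2 ?posrE // gtrDl oppr_lt0.
  rewrite /SW_C.
  have -> : qC lam mu Rw C (Rw - C / (mu - m)) = m / lam.
    rewrite /qC /xi (_ : Rw - (Rw - C / (mu - m)) = C / (mu - m)); last by ring.
    rewrite (_ : mu - C / (C / (mu - m)) = m); last first.
      by field; rewrite !lt0r_neq0.
    apply/min_idPl; rewrite ler_pdivrMr // mul1r //.
  by have -> : lam * (m / lam) = m by rewrite mulrC divfK // gt_eqF.
have mfw : measurable_fun setT (fw mu Rw C).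
  rewrite /fw /W; apply: measurable_funM => //.
  apply: measurable_funB => //; apply: measurable_funM => //.
  have h : measurable_fun setT (fun y : R => mu - y) by apply: measurable_funB.
  exact: (measurableT_comp (measurable_inv R) h).
have hP : forall p, 0 <= p < Rw - C / mu -> (SW_P P L lam mu Rw C p <= (fw mu Rw C m)%:E)%E.
  move=> p hp; have xp := xipos p hp; set x := xi mu Rw C p in xp *.
  have QpE : forall w, Qp L mu Rw C p w = x / Num.max (L w) x.
    move=> w; rewrite /Qp -/x; case: ifP => h.
      by rewrite (max_idPr h) divff // gt_eqF.
    by rewrite (max_idPl _) // ltW // ltNge h.
  have Qb : forall w, 0 <= lam * (x / Num.max (L w) x) <= lam.
    move=> w; have hm : 0 < Num.max (L w) x by rewrite lt_max xp orbT.
    apply/andP; split; first by rewrite mulr_ge0 ?divr_ge0 // ltW.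
    rewrite ler_piMr ?(ltW lam0) // ler_pdivrMr // mul1r.
    by rewrite le_max lexx orbT.
  rewrite /SW_P -(expectation_cst P (fw mu Rw C m)) unlock.
  under eq_integral => w _ do rewrite QpE.
  apply: le_integral => //.
  - apply: (@integ_bounded _ _ _ P _ (lam * (Rw + C * (mu - lam)^-1))).
      have mmax : measurable_fun setT (fun w => Num.max (L w) x).
        exact: measurable_maxr (measurable_funP L) (measurable_cst x).
      have minv := measurableT_comp (measurable_inv R) mmax.
      have mg : measurable_fun setT (fun w => lam * (x / Num.max (L w) x)).
        by apply: measurable_funM => //; apply: measurable_funM.
      exact: (measurableT_comp mfw mg).
    move=> w; apply: fw_bd; [exact: Qb|exact: lt_trans lamlmax lmaxmu|exact: ltW|exact: ltW].
  - by apply: (@integ_bounded _ _ _ P _ `|fw mu Rw C m|).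
  - by move=> w _; rewrite lee_fin; apply: fwmax.
split.
  by rewrite hC; apply: ge_ereal_sup => _ [q hq <-]; exact: hP.
rewrite hC; apply/esym/SWopt_eq.
  move=> p hp; rewrite /SW_S lee_fin.
  have : 0 <= qS P L mu Rw C p <= 1.
    rewrite /qS; case: ifP => _; first by rewrite ler01 lexx.
    set S := [set q0 : R | _].
    have [[y Sy]|nS] := pselect (exists y, S y).
      have [/andP[h1 h2] _] := xgetPex 0 (ex_intro _ y Sy).
      by rewrite h1 ltW.
    rewrite xgetPN; first by rewrite lexx ler01.
    by move=> y Sy; apply: nS; exists y.
  move=> /andP[q0 q1].
  change (fw mu Rw C (lam * qS P L mu Rw C p) <= fw mu Rw C m).
  apply: fwmax; apply/andP; split; first exact: mulr_ge0 (ltW lam0) q0.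
  by rewrite ler_piMr //; exact: ltW.
have hM : P (L @^-1` `]lmax, +oo[) = 0%E.
  by apply: as_bound => x hx; have /andP[_ ->] := hsupp x hx.
have c0 : 0 < lmax / 2 by rewrite divr_gt0.
have cM : lmax / 2 < lmax by move: lmax0; lra.
have hc : (0 < P [set w | (lmax / 2 < L w)%R])%E.
  apply: lt_le_trans (smax _ c0) _.
  apply: le_measure; rewrite ?inE.
  - rewrite (_ : [set w | _] = L @^-1` `]lmax - lmax / 2, lmax + lmax / 2[).
      exact: measurable_funPTI (measurable_itv _).
    by apply/seteqP; split => w /=; rewrite in_itv /= distrC ltr_distlC.
  - rewrite (_ : [set w | _] = L @^-1` `]lmax / 2, +oo[).
      exact: measurable_funPTI (measurable_itv _).
    by apply/seteqP; split => w /=; rewrite in_itv /= andbT.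
  - move=> w /=; rewrite distrC ltr_distlC => /andP[h _]; move: h; lra.
have gfin := gE_fin P L mu lmax L0 lmax0 lmaxmu hM.
have gmono := gE_mono P L mu lmax (lmax/2) L0 lmax0 lmaxmu hM c0 cM hc.
have gle := gE_le P L mu lmax L0 lmax0 lmaxmu hM.
have g0 : fine ('E_P[fun w => W mu (0 * L w)])%E = mu^-1 by rewrite gE0.
have E1 : ('E_P[fun w => W mu (L w)])%E = ('E_P[fun w => W mu (1 * L w)])%E.
  by congr expectation; apply/funext => w; rewrite mul1r.
pose G1 := fine ('E_P[fun w => W mu (1 * L w)])%E.
have hG1 : ('E_P[fun w => W mu (L w)])%E = G1%:E by rewrite E1 gfin // ler01 lexx.
have G1pos : mu^-1 < G1 by rewrite -g0; apply: gmono; rewrite ?lexx ?ltr01.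
have G10 : 0 < G1 by apply: lt_trans G1pos; rewrite invr_gt0.
have hlbar : lbar P mu L = mu - G1^-1 by rewrite /lbar hG1.
have xi0E : xi mu Rw C 0 = mu - C / Rw by rewrite /xi subr0.
have case_i : lbar P mu L <= xi mu Rw C 0 -> C * G1 <= Rw.
  rewrite hlbar xi0E lerD2l lerN2 => h.
  have := ler_wpM2r (ltW (mulr_gt0 Rw0 G10)) h.
  have -> : C / Rw * (Rw * G1) = C * G1 by field; exact: lt0r_neq0.
  by have -> : G1^-1 * (Rw * G1) = Rw by field; exact: lt0r_neq0.
have xs_id : (1 + e) * xs = mu - C / Rw by rewrite /xs CRe; ring.
have e10 : 0 <= 1 + e by move: e0; lra.
have CRpos : 0 < C / Rw by rewrite divr_gt0.
have [hl|hl] := leP lam xs.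
  have -> : m = lam by rewrite /m (min_idPl hl).
  case: hcase => [hi|[hii hb]].
    exists 0; split.
      by rewrite lexx /= subr_gt0.
    rewrite /SW_S /qS.
    have cond : (C%:E * ('E_P[fun w => W mu (L w)])%E <= (Rw - 0)%:E)%E.
      by rewrite hG1 -EFinM lee_fin subr0; exact: case_i.
    by rewrite (asboolT cond) mulr1.
  exfalso.
  have lx : lmax <= mu - C / Rw.
    apply: le_trans hb _; rewrite -xs_id; exact: ler_wpM2l.
  have hG : G1 <= (mu - lmax)^-1.
    by have := gle 1 lmax _ _ lmaxmu; rewrite mul1r; apply; rewrite ?ler01 ?lexx.
  have hG' : mu - lmax <= G1^-1.
    by rewrite -[mu - lmax]invrK lef_pV2 ?posrE ?invr_gt0 ?subr_gt0.
  move: hii; rewrite hlbar xi0E; move: hG' lx; move: (G1^-1) => t; lra.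
have -> : m = xs by rewrite /m (min_idPr (ltW hl)).
pose q0 := xs / lam.
have q00 : 0 < q0 by rewrite divr_gt0.
have q01 : q0 < 1 by rewrite ltr_pdivrMr // mul1r.
have lq0 : lam * q0 = xs by rewrite /q0 mulrC divfK // gt_eqF.
pose gq := fine ('E_P[fun w => W mu (q0 * L w)])%E.
have gq_lt : gq < G1 by apply: gmono; rewrite ?(ltW q00) ?lexx.
have gq_gt : mu^-1 < gq by rewrite -g0; apply: gmono; rewrite ?lexx ?(ltW q01).
have Cg : C * gq <= Rw.
  case: hcase => [hi|[hii hb]].
    apply: le_trans (case_i hi); rewrite ler_pM2l //; exact: ltW.
  have hq0b : q0 * lmax <= mu - C / Rw.
    rewrite -xs_id; apply: (@le_trans _ _ (q0 * ((1 + e) * lam))).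
      by apply: ler_wpM2l => //; exact: ltW.
    by rewrite -lq0 mulrCA (mulrC q0).
  have := gle q0 (mu - C / Rw) _ hq0b _.
  rewrite (_ : mu - (mu - C / Rw) = C / Rw); last by ring.
  rewrite (ltW q00) (ltW q01) => /(_ isT); rewrite gtrBl => /(_ CRpos) h.
  have := ler_wpM2l (ltW C0) h.
  by have -> : C * (C / Rw)^-1 = Rw by field; apply/andP; split; exact: lt0r_neq0.
pose p := Rw - C * gq.
exists p; split.
  apply/andP; split; first by rewrite /p subr_ge0.
  by rewrite /p ltrD2l ltrN2 ltr_pM2l.
rewrite /SW_S /qS.
have ncond : ~ (C%:E * ('E_P[fun w => W mu (L w)])%E <= (Rw - p)%:E)%E.
  rewrite hG1 -EFinM lee_fin /p (_ : Rw - (Rw - C * gq) = C * gq); last by ring.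
  by rewrite ler_pM2l // leNgt gq_lt.
rewrite (asboolF ncond).
rewrite (@xget_eq _ 0 q0); first by rewrite lq0.
  split; first by rewrite (ltW q00) q01.
  by rewrite gfin ?(ltW q00) ?(ltW q01) // -EFinM /p -/gq; congr EFin; ring.
move=> y [/andP[y0 y1] hy].
have yb : 0 <= y <= 1 by rewrite y0 ltW.
have hgy : fine ('E_P[fun w => W mu (y * L w)])%E = gq.
  apply: (mulfI (lt0r_neq0 C0)); apply: EFin_inj.
  rewrite EFinM -(gfin y yb) hy /p; congr EFin; ring.
have [yq|yq|//] := ltgtP y q0.
  by have := gmono y q0 y0 yq (ltW q01); rewrite hgy ltxx.
by have := gmono q0 y (ltW q00) yq (ltW y1); rewrite hgy ltxx.
Qed.
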